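(* The following are equivalent: (1) $C(X)_\mathcal{P}$ is clean; (2) $C(X)_\mathcal{P}$ is weakly clean; (3) $C(X)_\mathcal{P}$ is semiclean.
   Context: Let $(X,\tau)$ be a $T_1$ topological space and $\mathcal{P}$ an ideal of closed subsets of $X$ (a nonempty family of closed sets closed under finite unions and under taking closed subsets). For $f\colon X\to\mathbb{R}$, $D_f$ denotes the set of points of discontinuity of $f$, and $C(X)_\mathcal{P}=\{f\colon X\to\mathbb{R} : \overline{D_f}\in\mathcal{P}\}$, a commutative ring with unity under pointwise operations. A ring $R$ is clean if every element is $u+e$ with $u$ a unit and $e$ idempotent; weakly clean if every element is $u+e$ or $u-e$ with $u$ a unit and $e$ idempotent; semiclean if every element is $u+a$ with $u$ a unit and $a$ periodic, i.e. $a^k=a^l$ for some positive integers $k\neq l$. *)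

(* Defs.v *)
(* The reals are an arbitrary [R : realType]
   (any two realTypes are isomorphic, so this is the paper's R). *)
From HB Require Import structures.
From mathcomp Require Import all_boot all_order all_algebra.
From mathcomp Require Import all_classical all_reals all_analysis.
Set Implicit Arguments. Unset Strict Implicit. Unset Printing Implicit Defensive.
Import Order.TTheory GRing.Theory Num.Theory.
Import numFieldNormedType.Exports.
Local Open Scope classical_set_scope.
Local Open Scope ring_scope.

Definition closed_ideal {X : topologicalType} (P : set (set X)) : Prop :=
  [/\ P !=set0,
      (forall A, P A -> closed A),
      (forall A B, P A -> P B -> P (A `|` B)) &
      (forall A B, P A -> closed B -> B `<=` A -> P B)].

Definition discont {X : topologicalType} {R : realType} (f : X -> R) : set X :=
  [set x : X | ~ (f @ x --> f x)].

Definition CP {X : topologicalType} {R : realType} (P : set (set X))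
  (f : X -> R) : Prop := P (closure (discont f)).

Definition CP_unit {X : topologicalType} {R : realType} (P : set (set X))
  (u : X -> R) : Prop :=
  CP P u /\ exists v : X -> R, CP P v /\ forall x, u x * v x = 1.

Definition CP_idem {X : topologicalType} {R : realType} (P : set (set X))
  (e : X -> R) : Prop :=
  CP P e /\ forall x, e x * e x = e x.

Definition CP_periodic {X : topologicalType} {R : realType} (P : set (set X))
  (a : X -> R) : Prop :=
  CP P a /\ exists k l : nat, [/\ (0 < k)%N, (0 < l)%N, k <> l &
                               forall x, a x ^+ k = a x ^+ l].

Definition CP_clean {X : topologicalType} {R : realType} (P : set (set X)) : Prop :=
  forall f : X -> R, CP P f ->
    exists u e, [/\ CP_unit P u, CP_idem P e & forall x, f x = u x + e x].

Definition CP_weakly_clean {X : topologicalType} {R : realType} (P : set (set X)) : Prop :=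
  forall f : X -> R, CP P f ->
    exists u e, [/\ CP_unit P u, CP_idem P e &
      (forall x, f x = u x + e x) \/ (forall x, f x = u x - e x)].

Definition CP_semiclean {X : topologicalType} {R : realType} (P : set (set X)) : Prop :=
  forall f : X -> R, CP P f ->
    exists u a, [/\ CP_unit P u, CP_periodic P a & forall x, f x = u x + a x].

(* Main.v *)
Require Import Defs.
From HB Require Import structures.
From mathcomp Require Import all_boot all_order all_algebra.
From mathcomp Require Import all_classical all_reals all_analysis.
From mathcomp Require Import lra.
Set Implicit Arguments. Unset Strict Implicit. Unset Printing Implicit Defensive.
Import Order.TTheory GRing.Theory Num.Theory.
Import numFieldNormedType.Exports.
Local Open Scope classical_set_scope.
Local Open Scope ring_scope.

Lemma CP_of {X : topologicalType} {R : realType} (P : set (set X))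
  (hP : closed_ideal P) (D : set X) (h : X -> R) :
  P D -> closed D -> (forall x, ~ D x -> h @ x --> h x) -> CP P h.
Proof.
case: hP => _ _ _ hsub PD cD hc.
apply: (hsub D) => //; first exact: closed_closure.
rewrite [X in _ `<=` X](closure_id D).1 //; apply: closure_subset => x hx.
by apply: contrapT => nD; apply: hx; exact: hc.
Qed.

Lemma nearS {T : Type} {F : set_system T} {FF : Filter F} {P Q : T -> Prop} :
  (forall y, P y -> Q y) -> (\forall y \near F, P y) -> \forall y \near F, Q y.
Proof. by move=> h; apply: filterS. Qed.

Lemma cont_out {X : topologicalType} {R : realType} (f : X -> R) (x : X) :
  ~ closure (discont f) x -> f @ x --> f x.
Proof.
by move=> nx; apply: contrapT => nc; apply: nx; apply: subset_closure; exact: nc.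
Qed.

Lemma tripotent {R : realType} (y : R) (k l : nat) :
  (0 < k)%N -> (0 < l)%N -> k <> l -> y ^+ k = y ^+ l ->
  y = 0 \/ y = 1 \/ y = -1.
Proof.
wlog kl : k l / (k < l)%N.
  move=> H k0 l0 nkl e. idtac.
  have [lt|gt|eq] := ltngtP k l; first exact: (H k l).
  - exact: (H l k gt l0 k0 (nesym nkl) (esym e)).
  - by [].
move=> k0 l0 _ e.
have [->|y0] := eqVneq y 0; first by left.
right.
have e1 : y ^+ (l - k) = 1.
  have : y ^+ k * y ^+ (l - k) = y ^+ k * 1.
    by rewrite -exprD subnKC ?(ltnW kl) // mulr1.
  by move/mulfI; apply; rewrite expf_eq0 (negbTE y0) andbF.
have n1 : `|y| = 1.
  apply/eqP; rewrite -(@pexpr_eq1 _ _ (l - k)) ?subn_gt0 //.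
  by rewrite -normrX e1 normr1.
have : y ^+ 2 == 1 by rewrite sqr_norm_eq1 n1.
by rewrite sqrf_eq1 => /orP[/eqP->|/eqP->]; [left|right].
Qed.

Lemma same_sign {R : realType} (s t : R) : t != 0 -> `|t - s| < `|t| ->
  (0 < s) = (0 < t).
Proof.
move=> t0; have [tn|tp|te] := ltrgtP t 0.
- rewrite (ltr0_norm tn) ltr_norml => /andP[h1 h2].
  apply/negbTE; rewrite -leNgt; lra.
- rewrite (gtr0_norm tp) ltr_norml => /andP[h1 h2].
  lra.
- by rewrite te eqxx in t0.
Qed.

Theorem theorem3p10 (X : topologicalType) (R : realType) (P : set (set X))
  (hT1 : accessible_space X) (hP : closed_ideal P) :
  (@CP_clean X R P <-> @CP_weakly_clean X R P) /\
  (@CP_weakly_clean X R P <-> @CP_semiclean X R P).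
Proof.
have c2w : @CP_clean X R P -> @CP_weakly_clean X R P.
  move=> hc f Cf; have [u [e [Hu He Hf]]] := hc f Cf.
  by exists u, e; split => //; left.
have w2s : @CP_weakly_clean X R P -> @CP_semiclean X R P.
  move=> hw f Cf; have [u [e [Hu [Ce He] [Hf|Hf]]]] := hw f Cf.
  - exists u, e; split => //; split => //; exists 1%N, 2%N; split => // x.
    by rewrite expr1 expr2 He.
  - exists u, (fun x => - e x); split => //.
    split.
      apply: (CP_of hP Ce (@closed_closure _ _)) => x nx.
      exact: (cvgN (cont_out nx)).
    exists 1%N, 3%N; split => // x.
    by rewrite expr1 !exprS expr0 mulr1 !mulrNN ?mulrN ?mulNr He He.
have s2c : @CP_semiclean X R P -> @CP_clean X R P.
  move=> hs f Cf.
  pose g := fun x => 1 - (f x + f x).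
  have Cg : CP P g.
    apply: (CP_of hP Cf (@closed_closure _ _)) => x nx.
    have := cvgB (cvg_cst (1:R)) (cvgD (cont_out nx) (cont_out nx)).
    exact.
  have [u [a [[Cu [w [Cw uw]]] [Ca [k [l [k0 l0 kl hkl]]]] hg]]] := hs g Cg.
  have ha : forall x, a x = 0 \/ a x = 1 \/ a x = -1.
    by move=> x; apply: (tripotent k0 l0 kl (hkl x)).
  have hu : forall x, u x != 0.
    move=> x; apply/eqP => h; have := uw x; rewrite h mul0r => /eqP.
    by rewrite eq_sym oner_eq0.
  pose e := fun x => if (a x == -1) || ((a x == 0) && (0 < u x)) then 1 else 0 : R.
  pose v := fun x => f x - e x.
  have hv : forall x, v x != 0.
    move=> x; apply/eqP; rewrite /v /e.
    have hgx := hg x; rewrite /g in hgx.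
    have /eqP hux := hu x.
    case: (ha x) => [ax|[ax|ax]]; rewrite ax /= in hgx *.
    - have e1 : (0 == -1 :> R) = false by apply/eqP; lra.
      rewrite e1 eqxx /=.
      have [up|un] := boolP (0 < u x); rewrite ?up ?(negbTE un) /= => h.
      + by move: hgx up h; clear; lra.
      + rewrite -leNgt in un; by move: hgx un h; clear; lra.
    - have e1 : (1 == -1 :> R) = false by apply/eqP; lra.
      have e2 : (1 == 0 :> R) = false by apply/eqP; lra.
      rewrite e1 e2 /=.
      move=> h; apply: hux; by move: hgx h; clear; lra.
    - rewrite eqxx /= => h; apply: hux; by move: hgx h; clear; lra.
  pose D := closure (discont f) `|` closure (discont u) `|` closure (discont a).
  have hU : forall A B, P A -> P B -> P (A `|` B) by case: hP.
  have PD : P D by apply: (hU); [apply: (hU)|].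
  have cD : closed D by apply: closedU; [apply: closedU|]; exact: closed_closure.
  have ce : forall x, ~ D x -> e @ x --> e x.
    move=> x nx.
    have nf : ~ closure (discont f) x by move=> h; apply: nx; left; left.
    have nu : ~ closure (discont u) x by move=> h; apply: nx; left; right.
    have na : ~ closure (discont a) x by move=> h; apply: nx; right.
    have ea : \forall y \near x, a y = a x.
      have h2 : (0:R) < 1/2 by lra.
      have H := cvgr_dist_lt (FF:=nbhs_filter x) _ _ (cont_out na) _ h2.
      suff hh : forall y, `|a x - a y| < 1/2 -> a y = a x.
        exact: (@nearS _ _ (nbhs_filter x) _ _ hh H).
      move=> y.
      rewrite ltr_norml => /andP[h1 h3].
      by case: (ha x) => [ax|[ax|ax]]; case: (ha y) => [ay|[ay|ay]];
        rewrite ax ay in h1 h3 *; move: h1 h3; clear; lra.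
    have eu : \forall y \near x, (0 < u y) = (0 < u x).
      have h2 : (0:R) < `|u x| by rewrite normr_gt0.
      have H := cvgr_dist_lt (FF:=nbhs_filter x) _ _ (cont_out nu) _ h2.
      suff hh : forall y, `|u x - u y| < `|u x| -> (0 < u y) = (0 < u x).
        exact: (@nearS _ _ (nbhs_filter x) _ _ hh H).
      by move=> y; apply: same_sign.
    have ee : \forall y \near x, e x = e y.
      suff hh : forall y, a y = a x /\ (0 < u y) = (0 < u x) -> e x = e y.
        exact: (@nearS _ _ (nbhs_filter x) _ _ hh (filterI ea eu)).
      by move=> y [h1 h3]; rewrite /e h1 h3.
    exact: cvg_trans (near_eq_cvg ee) (cvg_cst _).
  have cv : forall x, ~ D x -> v @ x --> v x.
    move=> x nx.
    have nf : ~ closure (discont f) x by move=> h; apply: nx; left; left.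
    exact: (cvgB (cont_out nf) (ce x nx)).
  exists v, e; split.
  - split.
      apply: (CP_of hP PD cD) => x nx; exact: cv.
    exists (fun x => (v x)^-1); split; last by move=> x; rewrite mulfV.
    apply: (CP_of hP PD cD) => x nx.
    exact: (cvgV (hv x) (cv x nx)).
  - split.
      apply: (CP_of hP PD cD) => x nx; exact: ce.
    by move=> x; rewrite /e; case: ifP => _; rewrite ?mulr1 ?mulr0.
  - by move=> x; rewrite /v subrK.
split; split => //.
- move=> /w2s; exact: s2c.
- by move=> /s2c /c2w.
Qed.
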